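(* Let $m$ be a non-negative integer and $k=(m+2)^{-2}-1$. Then the identity component of the differential Galois group (over $\mathbb{C}(z)$) of the equation \[ y''+\left(\frac{2}{z}+\frac{1}{z-1}\right)y'+\left(-\frac{1}{(1+k)(z-1)^2}+\frac{1}{(1+k)z(z-1)}\right)y=0,\qquad '=\frac{d}{dz}, \] is Abelian. *)

(* Defs.v *)
(* The field of constants C is  R[i]  for R : realType (any realType is a
   complete archimedean ordered field, i.e. a copy of the reals, so R[i] is
   a copy of the complex numbers). *)
From mathcomp Require Import all_boot all_algebra.
From mathcomp.real_closed Require Import complex.
From mathcomp Require Import reals.

Set Implicit Arguments.
Unset Strict Implicit.
Unset Printing Implicit Defensive.
Import GRing.Theory.
Local Open Scope ring_scope.

Definition derivation (L : fieldType) (D : L -> L) : Prop :=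
  (forall x y, D (x + y) = D x + D y) /\
  (forall x y, D (x * y) = D x * y + x * D y).

Definition field_generated_by (L : fieldType) (S : L -> Prop) : Prop :=
  forall K : L -> Prop,
    K 0 -> K 1 ->
    (forall x y, K x -> K y -> K (x - y)) ->
    (forall x y, K x -> K y -> K (x * y)) ->
    (forall x, K x -> K x^-1) ->
    (forall x, S x -> K x) ->
    forall x, K x.

Definition kcoef (L : fieldType) (m : nat) : L := ((m + 2)%:R)^-2 - 1.

Definition coef_a (L : fieldType) (z : L) : L :=
  2 / z + 1 / (z - 1).

Definition coef_b (L : fieldType) (m : nat) (z : L) : L :=
  - (1 / ((1 + kcoef L m) * (z - 1) ^+ 2))
  + 1 / ((1 + kcoef L m) * z * (z - 1)).

(* (L, D) is a Picard-Vessiot extension of (C(z), d/dz) for the equation,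
   with C embedded in L by iota, z in L the variable (D z = 1), and
   y1, y2 a fundamental system of solutions:
   - D is a derivation, iota(C) consists of constants, and every constant of L
     lies in iota(C) (no new constants);
   - D z = 1;
   - y1, y2 solve the equation and their Wronskian is nonzero;
   - L is generated as a field by C, z, y1, y2, y1', y2'. *)
Definition picard_vessiot (R : realType) (m : nat) (L : fieldType)
    (D : L -> L) (iota : {rmorphism R[i] -> L}) (z y1 y2 : L) : Prop :=
  derivation D /\
  (forall c, D (iota c) = 0) /\
  (forall x, D x = 0 -> exists c, x = iota c) /\
  D z = 1 /\
  (forall y, y = y1 \/ y = y2 ->
     D (D y) + coef_a z * D y + coef_b m z * y = 0) /\
  y1 * D y2 - y2 * D y1 != 0 /\
  field_generated_by
        (fun x => (exists c, x = iota c) \/ x = z \/ x = y1 \/ x = y2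
                  \/ x = D y1 \/ x = D y2).

(* The differential Galois group: differential field automorphisms of L
   fixing C(z) (i.e. fixing iota(C) and z). *)
Definition diff_gal (R : realType) (L : fieldType) (D : L -> L)
    (iota : {rmorphism R[i] -> L}) (z : L) (s : L -> L) : Prop :=
  bijective s /\
  (forall x y, s (x + y) = s x + s y) /\
  (forall x y, s (x * y) = s x * s y) /\
  s 1 = 1 /\
  (forall x, s (D x) = D (s x)) /\
  (forall c, s (iota c) = iota c) /\
  s z = z.

Definition gal_matrix (R : realType) (L : fieldType)
    (iota : {rmorphism R[i] -> L}) (y1 y2 : L) (s : L -> L)
    (A : 'M[R[i]]_2) : Prop :=
  s y1 = iota (A 0 0) * y1 + iota (A 1 0) * y2 /\
  s y2 = iota (A 0 1) * y1 + iota (A 1 1) * y2.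

Inductive mpexpr (C : Type) : Type :=
| MPConst of C
| MPVar of 'I_2 & 'I_2
| MPAdd of mpexpr C & mpexpr C
| MPMul of mpexpr C & mpexpr C.

Fixpoint mpeval (C : nzRingType) (p : mpexpr C) (A : 'M[C]_2) : C :=
  match p with
  | MPConst c => c
  | MPVar i j => A i j
  | MPAdd p q => mpeval p A + mpeval q A
  | MPMul p q => mpeval p A * mpeval q A
  end.

Definition zariski_closed (C : nzRingType) (Z : 'M[C]_2 -> Prop) : Prop :=
  exists (I : Type) (P : I -> mpexpr C),
    forall A, Z A <-> forall i, mpeval (P i) A = 0.

(* The Zariski topology on the Galois group, transported through the
   faithful representation s |-> gal_matrix.  F is relatively closed in a
   subset H of the Galois group. *)
Definition gal_rel_closed (R : realType) (L : fieldType)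
    (iota : {rmorphism R[i] -> L}) (y1 y2 : L)
    (H F : (L -> L) -> Prop) : Prop :=
  exists Z : 'M[R[i]]_2 -> Prop, zariski_closed Z /\
    forall s, F s <-> (H s /\ exists A, gal_matrix iota y1 y2 s A /\ Z A).

Definition gal_connected (R : realType) (L : fieldType)
    (iota : {rmorphism R[i] -> L}) (y1 y2 : L) (H : (L -> L) -> Prop) : Prop :=
  forall F1 F2,
    gal_rel_closed iota y1 y2 H F1 -> gal_rel_closed iota y1 y2 H F2 ->
    (forall s, H s -> F1 s \/ F2 s) ->
    (forall s, ~ (F1 s /\ F2 s)) ->
    (forall s, ~ F1 s) \/ (forall s, ~ F2 s).

(* The identity component G^0: union of all Zariski-connected subsets of the
   Galois group containing the identity. *)
Definition gal_identity_component (R : realType) (L : fieldType)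
    (D : L -> L) (iota : {rmorphism R[i] -> L}) (z y1 y2 : L)
    (s : L -> L) : Prop :=
  exists H : (L -> L) -> Prop,
    [/\ (forall t, H t -> diff_gal D iota z t),
        H id,
        gal_connected iota y1 y2 H
      & H s].

Definition abelian_maps (L : Type) (G : (L -> L) -> Prop) : Prop :=
  forall s t, G s -> G t -> forall x, s (t x) = t (s x).

(* Main.v *)
Require Import Defs.
From mathcomp Require Import all_boot all_algebra.
From mathcomp.real_closed Require Import complex.
From mathcomp Require Import reals.
From mathcomp Require Import ring zify.
Import GRing.Theory Num.Theory.
Local Open Scope ring_scope.

Set Implicit Arguments.
Unset Strict Implicit.
Unset Printing Implicit Defensive.

Lemma der0 (L : fieldType) (D : L -> L) : derivation D -> D 0 = 0.
Proof. move=> [hA hM]. apply: (addrI (D 0)). by rewrite addr0 -hA addr0. Qed.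

Lemma derN (L : fieldType) (D : L -> L) : derivation D -> forall x, D (- x) = - D x.
Proof. move=> hD x. have := hD.1 x (- x). rewrite subrr der0 // => H.
  by apply/eqP; rewrite -addr_eq0 addrC -H. Qed.

Lemma derB (L : fieldType) (D : L -> L) : derivation D -> forall x y, D (x - y) = D x - D y.
Proof. by move=> hD x y; rewrite hD.1 derN. Qed.

Lemma der1 (L : fieldType) (D : L -> L) : derivation D -> D 1 = 0.
Proof. move=> hD. have := hD.2 1 1. rewrite !mul1r mulr1 => H.
  apply: (addrI (D 1)). by rewrite addr0 -H. Qed.

Lemma derV (L : fieldType) (D : L -> L) : derivation D -> forall x, x != 0 ->
  D (x^-1) = - D x / x ^+ 2.
Proof. move=> hD x nx. have := hD.2 x x^-1. rewrite mulfV // der1 // => /eqP.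
  rewrite eq_sym => /eqP H. apply: (mulfI nx).
  have E : x * D x^-1 = - (D x * x^-1) by apply/eqP; rewrite -addr_eq0 addrC -H.
  rewrite E. field. exact: nx. Qed.

Lemma derM (L : fieldType) (D : L -> L) : derivation D -> forall x y, D (x * y) = D x * y + x * D y.
Proof. by move=> hD; exact: hD.2. Qed.

Lemma der_horner (R : realType) (L : fieldType) (D : L -> L)
  (iota : {rmorphism R[i] -> L}) : derivation D -> (forall c, D (iota c) = 0) ->
  forall (q : {poly R[i]}) x,
  D ((map_poly iota q).[x]) = (map_poly iota q^`()).[x] * D x.
Proof.
move=> hD hc q x; elim/poly_ind: q => [|q c IH].
  by rewrite map_poly0 deriv0 map_poly0 horner0 der0 // mul0r.
rewrite derivMXaddC !rmorphD !rmorphM /= !map_polyX map_polyC /=.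
rewrite hornerD hornerMX hornerC hornerD hornerMX hD.1 derM // IH hc.
ring.
Qed.

Lemma transc (R : realType) (L : fieldType) (D : L -> L)
  (iota : {rmorphism R[i] -> L}) : derivation D -> (forall c, D (iota c) = 0) ->
  forall u : L, u != 0 -> D u = - u ^+ 2 ->
  forall q : {poly R[i]}, (map_poly iota q).[u] = 0 -> q = 0.
Proof.
move=> hD hc u nu Du q.
have [n] := ubnP (size q); elim: n q => [|n IH] q; first by [].
rewrite ltnS => hs hq; case: (eqVneq q 0) => // nq.
have hq' : q^`() = 0.
  apply: IH; first exact: leq_trans (lt_size_deriv nq) hs.
  have := der_horner hD hc q u; rewrite hq der0 // Du => /esym/eqP.
  by rewrite mulf_eq0 oppr_eq0 expf_eq0 (negbTE nu) andbF orbF => /eqP.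
have qC : q = (q`_0)%:P.
  apply/polyP => i; rewrite coefC; case: i => [|i] //=.
  have := congr1 (fun p : {poly R[i]} => p`_i) hq'; rewrite coef_deriv coef0 => /eqP.
  by rewrite mulrn_eq0 /= => /eqP.
move: hq; rewrite qC map_polyC hornerC => /eqP; rewrite fmorph_eq0 => /eqP ->.
by rewrite polyC0.
Qed.

Fixpoint cc (F : fieldType) (N j : nat) : F :=
  match j with
  | 0 => 0
  | 1 => 0
  | 2 => 1
  | j'.+1 => cc F N j' * ((N ^ 2)%:R - (j' ^ 2)%:R) / ((j'.+1 * j'.-1)%:R)
  end.

Lemma cc_rec (F : numFieldType) (N j : nat) :
  cc F N j.+1 * ((j.+1)%:R * (j%:R - 1)) = cc F N j * ((N ^ 2)%:R - (j ^ 2)%:R).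
Proof.
case: j => [|[|j]] /=; rewrite ?mul0r //.
  by rewrite subrr !mulr0.
rewrite natrM; field.
by rewrite nat1r -natrD !pnatr_eq0.
Qed.

Lemma ccS (F : fieldType) (N j : nat) :
  cc F N j.+3 = cc F N j.+2 * ((N ^ 2)%:R - (j.+2 ^ 2)%:R) / ((j.+3 * j.+1)%:R).
Proof. by []. Qed.

Lemma cc_vanish (F : numFieldType) (N j : nat) : (2 <= N)%N -> (N.+1 <= j)%N ->
  cc F N j = 0.
Proof.
move=> hN; elim: j => [|j IH] //.
case: j IH => [|[|j]] IH hj.
- by move: hN hj; clear IH; case: N => [|[|N]].
- by move: hN hj; clear IH; case: N => [|[|N]].
rewrite ccS.
case: (ltnP N.+1 j.+3) => h.
  by rewrite IH ?mul0r.
have -> : N = j.+2 by lia.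
by rewrite subrr mulr0 mul0r.
Qed.

Definition Pc (F : numFieldType) (N : nat) : {poly F} := \poly_(j < N.+1) cc F N j.

Lemma coef_Pc (F : numFieldType) (N j : nat) : (2 <= N)%N -> (Pc F N)`_j = cc F N j.
Proof.
move=> hN; rewrite /Pc coef_poly; case: ltnP => // h.
by rewrite cc_vanish.
Qed.

Definition Qc (F : numFieldType) (N : nat) : {poly F} :=
  let P := Pc F N in
  let P1 := P^`() in
  let T := (P1 * 'X^2)^`() in
  T + T * 'X - P1 * 'X *+ 3 - P1 * 'X^2 - P * 'X * ((N ^ 2)%:R)%:P.

Lemma Qc0 (F : numFieldType) (N : nat) : (2 <= N)%N -> Qc F N = 0.
Proof.
move=> hN; apply/polyP => j; rewrite coef0 /Qc.
rewrite !coefB coefD coefMn !coefMX !coefMXn coefMC !coefMX !coef_deriv !coefMXn.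
case: j => [|[|j]]; rewrite ?coef_deriv ?subSS ?subn0 /=.
- by rewrite ?mul0rn ?mul0r ?subrr ?sub0r ?addr0 ?subr0 ?oppr0.
- by rewrite !coef_Pc //= ?mul0rn ?mul0r ?subrr ?sub0r ?addr0 ?subr0 ?oppr0.
rewrite !coef_Pc //.
have H := cc_rec F N j.+1.
transitivity (cc F N j.+2 * ((j.+2)%:R * ((j.+1)%:R - 1))
   - cc F N j.+1 * ((N ^ 2)%:R - ((j.+1) ^ 2)%:R)); first ring.
by rewrite H subrr.
Qed.

Definition solv (L : fieldType) (D : L -> L) (m : nat) (z y : L) :=
  D (D y) + coef_a z * D y + coef_b m z * y = 0.

Lemma z_facts (L : fieldType) (D : L -> L) (z : L) : derivation D -> D z = 1 ->
  z != 0 /\ z - 1 != 0.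
Proof.
move=> hD Dz; split; apply/eqP => h.
  by move: Dz; rewrite h der0 // => /eqP; rewrite eq_sym oner_eq0.
move: Dz; have -> : z = 1 by apply/eqP; rewrite -subr_eq0 h.
by rewrite der1 // => /eqP; rewrite eq_sym oner_eq0.
Qed.

Lemma r_sol (R : realType) (m : nat) (L : fieldType) (D : L -> L)
    (iota : {rmorphism R[i] -> L}) (z : L) :
  derivation D -> (forall c, D (iota c) = 0) -> D z = 1 ->
  solv D m z ((map_poly iota (Pc R[i] (m + 2))).[(z - 1)^-1]).
Proof.
move=> hD hc Dz.
have [nz nz1] := z_facts hD Dz.
have nN : (m + 2)%:R != 0 :> L by rewrite -(rmorph_nat iota) fmorph_eq0 pnatr_eq0 addn2.
set u := (z - 1)^-1.
have Du : D u = - u ^+ 2.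
  by rewrite /u derV // derB // Dz der1 // subr0 /u exprVn; field.
have hN : (2 <= m + 2)%N by rewrite addn2.
set P := Pc R[i] (m + 2).
pose ev q := (map_poly iota q).[u].
have evD p q : ev (p + q) = ev p + ev q by rewrite /ev rmorphD hornerD.
have evB p q : ev (p - q) = ev p - ev q by rewrite /ev rmorphB hornerD hornerN.
have evM p q : ev (p * q) = ev p * ev q by rewrite /ev rmorphM hornerM.
have evMn p k : ev (p *+ k) = ev p *+ k by rewrite /ev rmorphMn hornerMn.
have evN p : ev (- p) = - ev p by rewrite /ev rmorphN hornerN.
have evn k : ev k%:R = k%:R by rewrite /ev rmorph_nat hornerMn hornerC.
have evX : ev 'X = u by rewrite /ev map_polyX hornerX.
have evXn k : ev 'X^k = u ^+ k by rewrite /ev map_polyXn hornerXn.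
have evC c : ev c%:P = iota c by rewrite /ev map_polyC hornerC.
have HQ := congr1 ev (Qc0 R[i] hN).
rewrite /Qc -/P derivM derivXn /= in HQ.
rewrite !(evD, evB, evN, evM, evMn, evX, evXn, evC, evn) rmorph0 in HQ.
rewrite rmorph_nat /ev in HQ.
rewrite /solv.
have E0 : D (map_poly iota P).[u] = (map_poly iota P^`()).[u] * D u := der_horner hD hc P u.
have E1 : D (map_poly iota P^`()).[u] = (map_poly iota P^`()^`()).[u] * D u := der_horner hD hc _ u.
have Du2 : D (u ^+ 2) = (u + u) * D u by rewrite expr2 (derM hD); ring.
rewrite E0 (derM hD _ (D u)) E1 Du (derN hD) Du2 Du.
move: HQ; set p0 := (map_poly iota P).[u]; set p1 := (map_poly iota P^`()).[u];
  set p2 := (map_poly iota P^`()^`()).[u] => HQ.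
rewrite /coef_a /coef_b /kcoef.
lazymatch goal with |- ?G = 0 => lazymatch type of HQ with ?E = 0 =>
  have EE : G = E / (z * (z - 1)) end end.
  rewrite /u. field.
  apply/and4P; split => //; first by rewrite -natrD.
  by rewrite (_ : _ + _ = 1) ?oner_neq0 //; ring.
by rewrite EE HQ mul0r.
Qed.

Definition W (L : fieldType) (D : L -> L) (f g : L) := f * D g - g * D f.

Lemma W_der (L : fieldType) (D : L -> L) (m : nat) (z f g : L) : derivation D ->
  solv D m z f -> solv D m z g -> D (W D f g) = - coef_a z * W D f g.
Proof.
move=> hD hf hg; rewrite /W (derB hD) !(derM hD).
have Ef : D (D f) = - coef_a z * D f - coef_b m z * f.
  apply/eqP; rewrite -subr_eq0.
  rewrite (_ : _ - _ = D (D f) + coef_a z * D f + coef_b m z * f); last by ring.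
  by rewrite hf.
have Eg : D (D g) = - coef_a z * D g - coef_b m z * g.
  apply/eqP; rewrite -subr_eq0.
  rewrite (_ : _ - _ = D (D g) + coef_a z * D g + coef_b m z * g); last by ring.
  by rewrite hg.
rewrite Ef Eg; ring.
Qed.

Lemma quot_const (L : fieldType) (D : L -> L) (a x y : L) : derivation D ->
  D x = - a * x -> D y = - a * y -> y != 0 -> D (x / y) = 0.
Proof.
move=> hD Dx Dy ny; rewrite (derM hD) (derV hD) // Dx Dy; field.
by rewrite ny.
Qed.

Lemma decomp (L : fieldType) (D : L -> L) (m : nat) (z f g h : L) : derivation D ->
  solv D m z f -> solv D m z g -> solv D m z h -> W D g h != 0 ->
  [/\ f = (W D f h / W D g h) * g + (W D g f / W D g h) * h,
      D (W D f h / W D g h) = 0 & D (W D g f / W D g h) = 0].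
Proof.
move=> hD hf hg hh nW; split.
- move: nW; rewrite /W => nW.
  by field.
- exact: (quot_const hD (W_der hD hf hh) (W_der hD hg hh) nW).
- exact: (quot_const hD (W_der hD hg hf) (W_der hD hg hh) nW).
Qed.

Lemma Wrat_der (L : fieldType) (D : L -> L) (z : L) : derivation D -> D z = 1 ->
  D ((z ^+ 2 * (z - 1))^-1) = - coef_a z * (z ^+ 2 * (z - 1))^-1.
Proof.
move=> hD Dz; have [nz nz1] := z_facts hD Dz.
rewrite (derV hD); last by rewrite mulf_neq0 ?expf_neq0.
rewrite (derM hD) expr2 (derM hD) (derB hD) Dz (der1 hD) /coef_a.
field; by rewrite nz nz1.
Qed.


Lemma s0 (R : realType) (L : fieldType) (D : L -> L) (iota : {rmorphism R[i] -> L}) (z : L)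
  (s : L -> L) : diff_gal D iota z s -> s 0 = 0.
Proof. move=> [_ [sD _]]. apply: (addrI (s 0)). by rewrite addr0 -sD addr0. Qed.

Lemma sN (R : realType) (L : fieldType) (D : L -> L) (iota : {rmorphism R[i] -> L}) (z : L)
  (s : L -> L) : diff_gal D iota z s -> forall x, s (- x) = - s x.
Proof.
move=> hs x; have := hs.2.1 x (- x); rewrite subrr (s0 hs) => H.
by apply/eqP; rewrite -addr_eq0 addrC -H.
Qed.

Lemma sB (R : realType) (L : fieldType) (D : L -> L) (iota : {rmorphism R[i] -> L}) (z : L)
  (s : L -> L) : diff_gal D iota z s -> forall x y, s (x - y) = s x - s y.
Proof. by move=> hs x y; rewrite hs.2.1 (sN hs). Qed.

Lemma sV (R : realType) (L : fieldType) (D : L -> L) (iota : {rmorphism R[i] -> L}) (z : L)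
  (s : L -> L) : diff_gal D iota z s -> forall x, s (x^-1) = (s x)^-1.
Proof.
move=> hs x; case: (eqVneq x 0) => [->|nx]; first by rewrite invr0 (s0 hs) invr0.
have h : s x * s x^-1 = 1 by rewrite -hs.2.2.1 mulfV // hs.2.2.2.1.
have nsx : s x != 0 by apply/eqP => e; move: h; rewrite e mul0r => /eqP; rewrite eq_sym oner_eq0.
by rewrite -[s x^-1]mul1r -(mulVf nsx) -mulrA h mulr1.
Qed.

Lemma snat (R : realType) (L : fieldType) (D : L -> L) (iota : {rmorphism R[i] -> L}) (z : L)
  (s : L -> L) : diff_gal D iota z s -> forall k, s k%:R = k%:R.
Proof.
move=> hs; elim=> [|k IH]; first exact: (s0 hs).
by rewrite mulrS hs.2.1 IH hs.2.2.2.1 -mulrS.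
Qed.

Lemma sX (R : realType) (L : fieldType) (D : L -> L) (iota : {rmorphism R[i] -> L}) (z : L)
  (s : L -> L) : diff_gal D iota z s -> forall x k, s (x ^+ k) = s x ^+ k.
Proof.
move=> hs x; elim=> [|k IH]; first by rewrite !expr0 hs.2.2.2.1.
by rewrite !exprS hs.2.2.1 IH.
Qed.

Lemma s_horner (R : realType) (L : fieldType) (D : L -> L) (iota : {rmorphism R[i] -> L}) (z : L)
  (s : L -> L) : diff_gal D iota z s -> forall (q : {poly R[i]}) x,
  s ((map_poly iota q).[x]) = (map_poly iota q).[s x].
Proof.
move=> hs q x; elim/poly_ind: q => [|q c IH].
  by rewrite map_poly0 !horner0 (s0 hs).
rewrite !rmorphD !rmorphM /= !map_polyX map_polyC /= !hornerD !hornerMX !hornerC.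
by rewrite hs.2.1 hs.2.2.1 IH hs.2.2.2.2.2.1.
Qed.

Lemma s_a (R : realType) (L : fieldType) (D : L -> L) (iota : {rmorphism R[i] -> L}) (z : L)
  (s : L -> L) : diff_gal D iota z s -> s (coef_a z) = coef_a z.
Proof.
move=> hs; have sz := hs.2.2.2.2.2.2; have s1 := hs.2.2.2.1.
rewrite /coef_a hs.2.1 !hs.2.2.1 !(sV hs) (sB hs) sz s1 (snat hs 2).
done.
Qed.

Lemma s_b (R : realType) (m : nat) (L : fieldType) (D : L -> L) (iota : {rmorphism R[i] -> L}) (z : L)
  (s : L -> L) : diff_gal D iota z s -> s (coef_b m z) = coef_b m z.
Proof.
move=> hs; have sz := hs.2.2.2.2.2.2; have s1 := hs.2.2.2.1.
by rewrite /coef_b /kcoef ?(hs.2.1, sN hs, hs.2.2.1, sV hs, sX hs, sz, s1, snat hs).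
Qed.

Lemma s_solv (R : realType) (m : nat) (L : fieldType) (D : L -> L) (iota : {rmorphism R[i] -> L}) (z : L)
  (s : L -> L) : diff_gal D iota z s -> forall y, solv D m z y -> solv D m z (s y).
Proof.
move=> hs y hy; rewrite /solv -!hs.2.2.2.2.1 -(s_a hs) -(s_b m hs).
by rewrite -!hs.2.2.1 -!hs.2.1 hy (s0 hs).
Qed.

Lemma s_const (R : realType) (L : fieldType) (D : L -> L) (iota : {rmorphism R[i] -> L}) (z : L)
  (s : L -> L) : diff_gal D iota z s -> (forall x, D x = 0 -> exists c, x = iota c) ->
  forall x, D x = 0 -> s x = x.
Proof. by move=> hs hC x /hC [c ->]; rewrite hs.2.2.2.2.2.1. Qed.

Lemma s_W (R : realType) (m : nat) (L : fieldType) (D : L -> L) (iota : {rmorphism R[i] -> L}) (z : L)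
  (s : L -> L) : derivation D -> D z = 1 -> diff_gal D iota z s ->
  (forall x, D x = 0 -> exists c, x = iota c) ->
  forall f g, solv D m z f -> solv D m z g -> s (W D f g) = W D f g.
Proof.
move=> hD Dz hs hC f g hf hg.
have [nz nz1] := z_facts hD Dz.
set Wr := (z ^+ 2 * (z - 1))^-1.
have nWr : Wr != 0 by rewrite invr_eq0 mulf_neq0 ?expf_neq0.
have sWr : s Wr = Wr.
  by rewrite /Wr ?(hs.2.1, sN hs, hs.2.2.1, sV hs, sX hs, hs.2.2.2.2.2.2, hs.2.2.2.1).
have Dk := quot_const hD (W_der hD hf hg) (Wrat_der hD Dz) nWr.
have E : W D f g = (W D f g / Wr) * Wr by rewrite mulfVK.
by rewrite E hs.2.2.1 (s_const hs hC Dk) sWr.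
Qed.

Lemma s_Wmap (R : realType) (L : fieldType) (D : L -> L) (iota : {rmorphism R[i] -> L}) (z : L)
  (s : L -> L) : diff_gal D iota z s -> forall f g, s (W D f g) = W D (s f) (s g).
Proof. by move=> hs f g; rewrite /W (sB hs) !hs.2.2.1 !hs.2.2.2.2.1. Qed.

Lemma s_shift (R : realType) (m : nat) (L : fieldType) (D : L -> L) (iota : {rmorphism R[i] -> L}) (z : L)
  (s : L -> L) : derivation D -> D z = 1 -> diff_gal D iota z s ->
  (forall x, D x = 0 -> exists c, x = iota c) ->
  forall r y, solv D m z r -> solv D m z y -> W D r y != 0 -> s r = r ->
  exists lam, D lam = 0 /\ s y = lam * r + y.
Proof.
move=> hD Dz hs hC r y hr hy nW sr.
have hsy := s_solv hs hy.
have [E Da _] := decomp hD hsy hr hy nW.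
have Eb : W D r (s y) / W D r y = 1.
  by rewrite -{1}sr -(s_Wmap hs) (s_W hD Dz hs hC hr hy) mulfV.
by exists (W D (s y) y / W D r y); split => //; rewrite {1}E Eb mul1r.
Qed.

Lemma Du_lem (L : fieldType) (D : L -> L) (z : L) : derivation D -> D z = 1 ->
  D ((z - 1)^-1) = - ((z - 1)^-1) ^+ 2.
Proof.
move=> hD Dz; have [nz nz1] := z_facts hD Dz.
by rewrite derV // derB // Dz der1 // subr0 exprVn; field.
Qed.

Lemma r_neq0 (R : realType) (m : nat) (L : fieldType) (D : L -> L)
    (iota : {rmorphism R[i] -> L}) (z : L) :
  derivation D -> (forall c, D (iota c) = 0) -> D z = 1 ->
  (map_poly iota (Pc R[i] (m + 2))).[(z - 1)^-1] != 0.
Proof.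
move=> hD hc Dz; have [nz nz1] := z_facts hD Dz.
apply/eqP => /(transc hD hc _ (Du_lem hD Dz)).
rewrite invr_eq0 => /(_ nz1) /(congr1 (fun p : {poly R[i]} => p`_2)).
rewrite coef_Pc ?addn2 // coef0 /= => /eqP; rewrite oner_eq0.
done.
Qed.

Lemma lin_fix (R : realType) (L : fieldType) (D : L -> L) (iota : {rmorphism R[i] -> L}) (z : L)
  (s : L -> L) : diff_gal D iota z s ->
  (forall x, D x = 0 -> exists c, x = iota c) ->
  forall a b r x, D a = 0 -> D b = 0 -> s r = r -> s (a * r + b * x) = a * r + b * s x.
Proof.
move=> hs hC a b r x Da Db sr.
by rewrite hs.2.1 !hs.2.2.1 (s_const hs hC Da) (s_const hs hC Db) sr.
Qed.

Theorem lemma3 (R : realType) (m : nat) (L : fieldType) (D : L -> L)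
    (iota : {rmorphism R[i] -> L}) (z y1 y2 : L) :
  picard_vessiot m D iota z y1 y2 ->
  abelian_maps (gal_identity_component D iota z y1 y2).
Proof.
move=> [hD [hc [hC [Dz [hy [nW0 gen]]]]]] s t [H1 [hH1 _ _ sH1]] [H2 [hH2 _ _ tH2]].
have gs := hH1 s sH1; have gt := hH2 t tH2.
have sol1 : solv D m z y1 by apply: hy; left.
have sol2 : solv D m z y2 by apply: hy; right.
set r := (map_poly iota (Pc R[i] (m + 2))).[(z - 1)^-1].
have solr : solv D m z r := r_sol m hD hc Dz.
have nr : r != 0 := r_neq0 m hD hc Dz.
have sfix (g : L -> L) : diff_gal D iota z g -> g r = r.
  move=> hg; rewrite /r (s_horner hg) (sV hg) (sB hg) hg.2.2.2.2.2.2 hg.2.2.2.1 //.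
have nW12 : W D y1 y2 != 0 by [].
have [y [soly nWy]] : exists y, solv D m z y /\ W D r y != 0.
  case: (eqVneq (W D r y2) 0) => h2; last by exists y2.
  case: (eqVneq (W D r y1) 0) => h1; last by exists y1.
  have [E _ _] := decomp hD solr sol1 sol2 nW12.
  have h1' : W D y1 r = 0 by rewrite /W; apply/eqP; rewrite -oppr_eq0 -h1 /W; apply/eqP; ring.
  by move: nr; rewrite E h2 h1' !mul0r addr0 eqxx.
have [ls [Dls sy]] := s_shift hD Dz gs hC solr soly nWy (sfix s gs).
have [lt [Dlt ty]] := s_shift hD Dz gt hC solr soly nWy (sfix t gt).
have sty : s (t y) = t (s y).
  rewrite ty sy gs.2.1 gs.2.2.1 (s_const gs hC Dlt) (sfix s gs) sy.
  rewrite gt.2.1 gt.2.2.1 (s_const gt hC Dls) (sfix t gt) ty.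
  ring.
have comm_sol f : solv D m z f -> s (t f) = t (s f).
  move=> hf; have [E Da Db] := decomp hD hf solr soly nWy.
  rewrite E (lin_fix gt hC _ Da Db (sfix t gt)) (lin_fix gs hC _ Da Db (sfix s gs)).
  by rewrite (lin_fix gs hC _ Da Db (sfix s gs)) (lin_fix gt hC _ Da Db (sfix t gt)) sty.
move=> x; apply: (gen (fun x => s (t x) = t (s x))).
- by rewrite (s0 gt) (s0 gs) (s0 gt).
- by rewrite gt.2.2.2.1 gs.2.2.2.1 gt.2.2.2.1.
- move=> a b ha hb.
  by rewrite (sB gt) (sB gs) (sB gs) (sB gt) ha hb.
- move=> a b ha hb.
  by rewrite gt.2.2.1 gs.2.2.1 gs.2.2.1 gt.2.2.1 ha hb.
- move=> a ha.
  by rewrite (sV gt) (sV gs) (sV gs) (sV gt) ha.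
move=> w [[c ->]|[->|[->|[->|[->|->]]]]].
- by rewrite gt.2.2.2.2.2.1 gs.2.2.2.2.2.1 gt.2.2.2.2.2.1.
- by rewrite gt.2.2.2.2.2.2 gs.2.2.2.2.2.2 gt.2.2.2.2.2.2.
- exact: comm_sol sol1.
- exact: comm_sol sol2.
- rewrite (gt.2.2.2.2.1 y1) (gs.2.2.2.2.1 (t y1)) (comm_sol _ sol1).
  by rewrite -(gt.2.2.2.2.1 (s y1)) -(gs.2.2.2.2.1 y1).
- rewrite (gt.2.2.2.2.1 y2) (gs.2.2.2.2.1 (t y2)) (comm_sol _ sol2).
  by rewrite -(gt.2.2.2.2.1 (s y2)) -(gs.2.2.2.2.1 y2).
Qed.
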